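(* Let $\lambda>0$, let $\Theta$ be a set (of market scenarios), and let $\eta:\mathbb{R}^n\times\Theta\to\mathbb{R}$, $\xi:\mathbb{R}^n\times\Theta\to\mathbb{R}^n$ be given. For $\alpha\in\mathbb{R}^n$, $\theta\in\Theta$ and a function $\psi(t,x)$ of class $C^{1,2}$ define $$\mathcal{L}^{\alpha,\theta}\psi(t,x)=\psi_t(t,x)+\eta(\alpha,\theta)\psi_x(t,x)+\tfrac12\|\xi(\alpha,\theta)\|_2^2\,\psi_{xx}(t,x),\qquad \mathcal{H}^{\alpha,\theta}\psi(t,x)=\|\xi(\alpha,\theta)\|_2^2\,\psi_x^2(t,x).$$ Let $\hat\alpha(t,x)\in\mathbb{R}^n$ and $\hat\theta(t,x)\in\Theta$ be given (feedback) functions. Consider System (I) for $(V,g)$: $$\sup_{\alpha\in\mathbb{R}^n}\inf_{\theta\in\Theta}\{\mathcal{L}^{\alpha,\theta}V(t,x)-\lambda\mathcal{H}^{\alpha,\theta}g(t,x)\}=\mathcal{L}^{\hat\alpha,\hat\theta}V(t,x)-\lambda\mathcal{H}^{\hat\alpha,\hat\theta}g(t,x)=0,\quad \mathcal{L}^{\hat\alpha,\hat\theta}g(t,x)=0,\quad V(T,x)=x,\quad g(T,x)=x,$$ and System (II) for $(f,g)$: $$\sup_{\alpha\in\mathbb{R}^n}\inf_{\theta\in\Theta}\{\mathcal{L}^{\alpha,\theta}f(t,x)+2\lambda g(t,x)\mathcal{L}^{\alpha,\theta}g(t,x)\}=\mathcal{L}^{\hat\alpha,\hat\theta}f(t,x)+2\lambda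 g(t,x)\mathcal{L}^{\hat\alpha,\hat\theta}g(t,x)=0,$$ $$\mathcal{L}^{\hat\alpha,\hat\theta}f(t,x)=0,\quad \mathcal{L}^{\hat\alpha,\hat\theta}g(t,x)=0,\quad f(T,x)=x-\lambda x^2,\quad g(T,x)=x.$$ Then: (1) if $(V,g)$ is a solution of System (I) with $V,g\in C^{1,2}$ in $(t,x)$, then $(f,g)$ with $f:=V-\lambda g^2$ is a solution of System (II); (2) if $(f,g)$ is a solution of System (II) with $f,g\in C^{1,2}$ in $(t,x)$, then $(V,g)$ with $V:=f+\lambda g^2$ is a solution of System (I).
   Context: These PDE systems arise from the robust dynamic mean-variance problem with wealth dynamics $dX_s=\eta(\alpha_s,\theta_s)ds+\xi(\alpha_s,\theta_s)\cdot d\mathcal{B}_s$ on $[t,T]$ and objective $E_t[X_T]-\lambda\,\mathrm{Var}_t(X_T)$; $\hat\alpha$ is a candidate equilibrium strategy and $\hat\theta$ the corresponding worst-case scenario. *)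

(* Defs.v *)
From Stdlib Require Import Reals.
From Stdlib Require Fin.
From Coquelicot Require Import Coquelicot.
Open Scope R_scope.

Definition vec (n : nat) := Fin.t n -> R.

Fixpoint sqnorm {n : nat} : vec n -> R :=
  match n return vec n -> R with
  | O => fun _ => 0
  | S m => fun v => (v Fin.F1) ^ 2 + sqnorm (fun i : Fin.t m => v (Fin.FS i))
  end.

Definition d_t (psi : R -> R -> R) (t x : R) : R := Derive (fun s => psi s x) t.
Definition d_x (psi : R -> R -> R) (t x : R) : R := Derive (fun y => psi t y) x.
Definition d_xx (psi : R -> R -> R) (t x : R) : R := Derive (fun y => d_x psi t y) x.

Definition C12 (psi : R -> R -> R) : Prop :=
  forall t x : R,
    ex_derive (fun s => psi s x) t /\
    ex_derive (fun y => psi t y) x /\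
    ex_derive (fun y => d_x psi t y) x /\
    continuous (fun p : R * R => psi (fst p) (snd p)) (t, x) /\
    continuous (fun p : R * R => d_t psi (fst p) (snd p)) (t, x) /\
    continuous (fun p : R * R => d_x psi (fst p) (snd p)) (t, x) /\
    continuous (fun p : R * R => d_xx psi (fst p) (snd p)) (t, x).

Definition Lgen {n : nat} {Theta : Type}
  (eta : vec n -> Theta -> R) (xi : vec n -> Theta -> vec n)
  (a : vec n) (th : Theta) (psi : R -> R -> R) (t x : R) : R :=
  d_t psi t x + eta a th * d_x psi t x + / 2 * sqnorm (xi a th) * d_xx psi t x.

Definition Hgen {n : nat} {Theta : Type}
  (xi : vec n -> Theta -> vec n)
  (a : vec n) (th : Theta) (psi : R -> R -> R) (t x : R) : R :=
  sqnorm (xi a th) * (d_x psi t x) ^ 2.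

Definition supinf {n : nat} {Theta : Type} (F : vec n -> Theta -> R) : Rbar :=
  Rbar_lub (fun r => exists a : vec n,
    r = Rbar_glb (fun s => exists th : Theta, s = Finite (F a th))).

Definition SystemI {n : nat} {Theta : Type}
  (eta : vec n -> Theta -> R) (xi : vec n -> Theta -> vec n) (lam T : R)
  (ah : R -> R -> vec n) (thh : R -> R -> Theta) (V g : R -> R -> R) : Prop :=
  (forall t x : R, 0 <= t < T ->
     supinf (fun a th => Lgen eta xi a th V t x - lam * Hgen xi a th g t x)
       = Finite (Lgen eta xi (ah t x) (thh t x) V t x
                 - lam * Hgen xi (ah t x) (thh t x) g t x) /\
     Lgen eta xi (ah t x) (thh t x) V t x
       - lam * Hgen xi (ah t x) (thh t x) g t x = 0 /\
     Lgen eta xi (ah t x) (thh t x) g t x = 0) /\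
  (forall x : R, V T x = x /\ g T x = x).

Definition SystemII {n : nat} {Theta : Type}
  (eta : vec n -> Theta -> R) (xi : vec n -> Theta -> vec n) (lam T : R)
  (ah : R -> R -> vec n) (thh : R -> R -> Theta) (f g : R -> R -> R) : Prop :=
  (forall t x : R, 0 <= t < T ->
     supinf (fun a th => Lgen eta xi a th f t x
                         + 2 * lam * g t x * Lgen eta xi a th g t x)
       = Finite (Lgen eta xi (ah t x) (thh t x) f t x
                 + 2 * lam * g t x * Lgen eta xi (ah t x) (thh t x) g t x) /\
     Lgen eta xi (ah t x) (thh t x) f t x
       + 2 * lam * g t x * Lgen eta xi (ah t x) (thh t x) g t x = 0 /\
     Lgen eta xi (ah t x) (thh t x) f t x = 0 /\
     Lgen eta xi (ah t x) (thh t x) g t x = 0) /\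
  (forall x : R, f T x = x - lam * x ^ 2 /\ g T x = x).

(* Main.v *)
Require Import Defs.
From Stdlib Require Import Reals Lra FunctionalExtensionality.
From Coquelicot Require Import Coquelicot.
Open Scope R_scope.

Section Aux.
Variables (V g F : R -> R -> R) (c : R).
Hypothesis HV : C12 V.
Hypothesis Hg : C12 g.
Hypothesis HF : forall t x, F t x = V t x + c * (g t x) ^ 2.

Lemma dt_F t x : d_t F t x = d_t V t x + c * (2 * g t x * d_t g t x).
Proof.
  unfold d_t. rewrite (Derive_ext _ (fun s => V s x + c * (g s x) ^ 2)) by (intros; apply HF).
  destruct (HV t x) as [H1 _]. destruct (Hg t x) as [H2 _].
  apply is_derive_unique.
  apply (is_derive_plus (fun s => V s x) (fun s => c * g s x ^ 2)).
  - apply Derive_correct; auto.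
  - replace (c * (2 * g t x * Derive (fun s => g s x) t)) with
      (c * (INR 2 * Derive (fun s => g s x) t * (g t x) ^ Nat.pred 2)) by (simpl; ring).
    apply (is_derive_scal (fun s => g s x ^ 2)).
    apply (is_derive_pow (fun s => g s x)). apply Derive_correct; auto.
Qed.

Lemma dx_F t x : d_x F t x = d_x V t x + c * (2 * g t x * d_x g t x).
Proof.
  unfold d_x. rewrite (Derive_ext _ (fun y => V t y + c * (g t y) ^ 2)) by (intros; apply HF).
  destruct (HV t x) as [_ [H1 _]]. destruct (Hg t x) as [_ [H2 _]].
  apply is_derive_unique.
  apply (is_derive_plus (fun y => V t y) (fun y => c * g t y ^ 2)).
  - apply Derive_correct; auto.
  - replace (c * (2 * g t x * Derive (fun y => g t y) x)) with
      (c * (INR 2 * Derive (fun y => g t y) x * (g t x) ^ Nat.pred 2)) by (simpl; ring).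
    apply (is_derive_scal (fun y => g t y ^ 2)).
    apply (is_derive_pow (fun y => g t y)). apply Derive_correct; auto.
Qed.

Lemma dxx_F t x : d_xx F t x = d_xx V t x
   + c * (2 * (d_x g t x) ^ 2 + 2 * g t x * d_xx g t x).
Proof.
  unfold d_xx. rewrite (Derive_ext _ (fun y => d_x V t y + c * (2 * g t y * d_x g t y)))
    by (intros; apply dx_F).
  destruct (HV t x) as [_ [_ [H1 _]]]. destruct (Hg t x) as [_ [H2 [H3 _]]].
  apply is_derive_unique.
  apply (is_derive_plus (fun y => d_x V t y) (fun y => c * (2 * g t y * d_x g t y))).
  - apply Derive_correct; auto.
  - apply (is_derive_scal (fun y => 2 * g t y * d_x g t y)).
    replace (2 * d_x g t x ^ 2 + 2 * g t x * Derive (fun y => d_x g t y) x) with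
      ((2 * d_x g t x) * d_x g t x + (2 * g t x) * Derive (fun y => d_x g t y) x)
      by ring.
    apply (is_derive_mult (fun y => 2 * g t y) (fun y => d_x g t y)).
    + apply (is_derive_scal (fun y => g t y)). unfold d_x. apply Derive_correct; auto.
    + apply Derive_correct; auto.
    + intros; apply Rmult_comm.
Qed.

Lemma L_F {n : nat} {Theta : Type} (eta : vec n -> Theta -> R) (xi : vec n -> Theta -> vec n)
  a th t x :
  Lgen eta xi a th F t x = Lgen eta xi a th V t x
    + c * (2 * g t x * Lgen eta xi a th g t x + Hgen xi a th g t x).
Proof.
  unfold Lgen, Hgen. rewrite dt_F, dx_F, dxx_F. field.
Qed.
End Aux.

Theorem proposition1 (n : nat) (Theta : Type)
  (eta : vec n -> Theta -> R) (xi : vec n -> Theta -> vec n)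
  (lam T : R) (ah : R -> R -> vec n) (thh : R -> R -> Theta) :
  0 < lam ->
  (forall V g : R -> R -> R, C12 V -> C12 g ->
     SystemI eta xi lam T ah thh V g ->
     SystemII eta xi lam T ah thh (fun t x => V t x - lam * (g t x) ^ 2) g) /\
  (forall f g : R -> R -> R, C12 f -> C12 g ->
     SystemII eta xi lam T ah thh f g ->
     SystemI eta xi lam T ah thh (fun t x => f t x + lam * (g t x) ^ 2) g).
Proof.
  intros Hlam. split.
  - intros V g HV Hg [H1 H2].
    set (F := fun t x => V t x - lam * (g t x) ^ 2).
    assert (HF : forall t x, F t x = V t x + (- lam) * (g t x) ^ 2)
      by (intros; unfold F; ring).
    assert (LF : forall a th t x, Lgen eta xi a th F t x
       + 2 * lam * g t x * Lgen eta xi a th g t x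
       = Lgen eta xi a th V t x - lam * Hgen xi a th g t x).
    { intros. rewrite (L_F V g F (-lam) HV Hg HF). ring. }
    split.
    + intros t x Ht. destruct (H1 t x Ht) as [A [B C]].
      assert (E : (fun a th => Lgen eta xi a th F t x
                         + 2 * lam * g t x * Lgen eta xi a th g t x)
                = (fun a th => Lgen eta xi a th V t x - lam * Hgen xi a th g t x)).
      { apply functional_extensionality; intro a;
        apply functional_extensionality; intro th. apply LF. }
      rewrite E, !LF, C. repeat split; auto.
      rewrite (L_F V g F (-lam) HV Hg HF), C. lra.
    + intros x. destruct (H2 x) as [A B]. unfold F. rewrite A, B. split; auto.
  - intros f g Hf Hg [H1 H2].
    set (F := fun t x => f t x + lam * (g t x) ^ 2).
    assert (HF : forall t x, F t x = f t x + lam * (g t x) ^ 2)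
      by (intros; unfold F; ring).
    assert (LF : forall a th t x, Lgen eta xi a th F t x - lam * Hgen xi a th g t x
       = Lgen eta xi a th f t x + 2 * lam * g t x * Lgen eta xi a th g t x).
    { intros. rewrite (L_F f g F lam Hf Hg HF). ring. }
    split.
    + intros t x Ht. destruct (H1 t x Ht) as [A [B [C D]]].
      assert (E : (fun a th => Lgen eta xi a th F t x - lam * Hgen xi a th g t x)
                = (fun a th => Lgen eta xi a th f t x
                         + 2 * lam * g t x * Lgen eta xi a th g t x)).
      { apply functional_extensionality; intro a;
        apply functional_extensionality; intro th. apply LF. }
      rewrite E, !LF. repeat split; auto.
    + intros x. destruct (H2 x) as [A B]. unfold F. rewrite A, B. split; auto. ring.
Qed.
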